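(* Let $X$ be a $G$-space such that the orbit map $\rho_X\colon X\to X/G$ is a fibration. Then (1) $\mathrm{cat}^{G,\infty}(X)=\mathrm{cat}^{G,2}(X)=\mathrm{cat}(\rho_X)\le\mathrm{cat}(X/G)$, and (2) $\mathrm{TC}^{G,\infty}(X)=\mathrm{TC}^{G,2}(X)\le\mathrm{TC}(X/G)$.
   Context: All spaces are well-pointed CW complexes, $G$ a topological group acting cellularly; $x_0\in X$ is the base point. $\mathrm{cat}$, $\mathrm{TC}$ are reduced LS category and topological complexity; for a map $f\colon X\to Y$, $\mathrm{cat}(f)$ is the least $n\ge 0$ such that $X$ is covered by $n+1$ open sets on each of which $f$ is nullhomotopic. $PX$ is the path space; $\mathcal{P}_k(X)=\{(\gamma_1,\dots,\gamma_k)\in(PX)^k\mid G\gamma_i(1)=G\gamma_{i+1}(0),\ 1\le i\le k-1\}$, $\pi_k(\gamma_1,\dots,\gamma_k)=(\gamma_1(0),\gamma_k(1))\in X\times X$. $\mathrm{secat}$ is reduced sectional category (least $n$ such that the base is covered by $n+1$ open sets each admitting a homotopy section). $\mathrm{TC}^{G,k}(X)=\mathrm{secat}(\pi_k)$, $\mathrm{TC}^{G,\infty}(X)=\min_k\mathrm{TC}^{G,k}(X)$. $P^k_*(X)=\{(\gamma_1,\dots,\gamma_k)\in\mathcal{P}_k(X)\mid\gamma_1(0)=x_0\}$, $q_k(\gamma_1,\dots,\gamma_k)=\gamma_k(1)$, $\mathrm{cat}^{G,k}(X)=\mathrm{secat}(q_k)$, $\mathrm{cat}^{G,\infty}(X)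=\min_k\mathrm{cat}^{G,k}(X)$.
   Formalization: The orbit space X/G is also assumed path-connected, and fibration means Hurewicz fibration (homotopy lifting with respect to all spaces). Apart from conventions, each condition added here is assumed in the paper as well or is needed for the statement above to hold. *)

(* Defs.v *)
From HB Require Import structures.
From mathcomp Require Import all_boot all_order all_algebra generic_quotient.
From mathcomp Require Import mathcomp_extra boolp classical_sets functions.
From mathcomp Require Import set_interval reals topology.
From mathcomp Require Import Rstruct Rstruct_topology.
From Stdlib Require Rdefinitions.
Import Order.TTheory GRing.Theory Num.Theory.
Local Notation R := Rdefinitions.R.

Set Implicit Arguments.
Unset Strict Implicit.
Unset Printing Implicit Defensive.

Local Open Scope classical_set_scope.
Local Open Scope ring_scope.
Local Open Scope quotient_scope.

Definition unit_interval : set R := `[0%R, 1%R].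
Definition I01 : topologicalType := set_type unit_interval.

Lemma i0_mem : (0%R : R) \in unit_interval.
Proof. by apply/mem_set; rewrite /unit_interval /= in_itv /= lexx ler01. Qed.
Lemma i1_mem : (1%R : R) \in unit_interval.
Proof. by apply/mem_set; rewrite /unit_interval /= in_itv /= lexx ler01. Qed.

Definition i0 : I01 := exist _ 0%R i0_mem.
Definition i1 : I01 := exist _ 1%R i1_mem.

Definition homotopic {A B : topologicalType} (f g : A -> B) : Prop :=
  exists H : A * I01 -> B, continuous H /\
    (forall a, H (a, i0) = f a) /\ (forall a, H (a, i1) = g a).

Definition nullhomotopic {A B : topologicalType} (f : A -> B) : Prop :=
  exists b : B, homotopic f (fun _ => b).

Definition path_connected (B : topologicalType) : Prop :=
  forall x y : B, exists g : I01 -> B,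
    continuous g /\ g i0 = x /\ g i1 = y.

Definition fibration {E B : topologicalType} (p : E -> B) : Prop :=
  forall (Z : topologicalType) (H : Z * I01 -> B) (h0 : Z -> E),
    continuous H -> continuous h0 -> (forall z, p (h0 z) = H (z, i0)) ->
    exists Ht : Z * I01 -> E, continuous Ht /\
      (forall zt, p (Ht zt) = H zt) /\ (forall z, Ht (z, i0) = h0 z).

(* Values in N u {oo}: None stands for infinity.                       *)
Definition natinf := option nat.

Definition natinf_le (a b : natinf) : Prop :=
  match a, b with
  | _, None => True
  | None, Some _ => False
  | Some m, Some n => (m <= n)%N
  end.

Definition least (P : nat -> Prop) : natinf :=
  match pselect (exists n, `[< P n >]) with
  | left h => Some (ex_minn h)
  | right _ => None
  end.

Definition natinf_min (f : nat -> natinf) : natinf :=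
  least (fun n => exists k, natinf_le (f k) (Some n)).

Definition open_cover_with {B : topologicalType} (n : nat)
    (Q : set B -> Prop) : Prop :=
  exists U : 'I_n.+1 -> set B,
    (forall i, open (U i)) /\ (\bigcup_i U i = setT) /\ (forall i, Q (U i)).

Definition has_homotopy_section {E B : topologicalType} (p : E -> B)
    (U : set B) : Prop :=
  exists s : U -> E, continuous s /\ homotopic (p \o s) (@set_val B U).

Definition secat {E B : topologicalType} (p : E -> B) : natinf :=
  least (fun n => open_cover_with n (has_homotopy_section p)).

Definition cat_map {A B : topologicalType} (f : A -> B) : natinf :=
  least (fun n => open_cover_with n
    (fun U : set A => nullhomotopic (f \o @set_val A U))).

Definition LScat (B : topologicalType) : natinf := cat_map (@idfun B).

Definition PX (X : topologicalType) : topologicalType :=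
  set_type [set f : {compact-open, I01 -> X} | continuous f].

Definition pev {X : topologicalType} (g : PX X) (t : I01) : X := set_val g t.

Definition path_fib (X : topologicalType) (g : PX X) : X * X :=
  (pev g i0, pev g i1).

Definition TC (X : topologicalType) : natinf := secat (@path_fib X).

Record topGroupAction (G X : topologicalType) := TopGroupAction {
  gmul : G -> G -> G;
  ginv : G -> G;
  gone : G;
  act : G -> X -> X;
  gmulA : forall a b c, gmul a (gmul b c) = gmul (gmul a b) c;
  gmul1 : forall a, gmul gone a = a;
  gmulV : forall a, gmul (ginv a) a = gone;
  gmul_cont : continuous (fun p : G * G => gmul p.1 p.2);
  ginv_cont : continuous ginv;
  act1 : forall x, act gone x = x;
  actM : forall g h x, act (gmul g h) x = act g (act h x);
  act_cont : continuous (fun p : G * X => act p.1 p.2)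
}.

Section Orbits.
Context {G X : topologicalType} (a : topGroupAction G X).

Definition same_orbit (x y : X) : Prop := exists g : G, act a g x = y.

Lemma same_orbit_refl x : same_orbit x x.
Proof. by exists (gone a); rewrite act1. Qed.

Lemma same_orbit_sym x y : same_orbit x y -> same_orbit y x.
Proof.
case=> g <-; exists (ginv a g).
by rewrite -actM gmulV act1.
Qed.

Lemma same_orbit_trans x y z : same_orbit x y -> same_orbit y z ->
  same_orbit x z.
Proof. by case=> g <- [h <-]; exists (gmul a h g); rewrite actM. Qed.

Definition orbit_rel : rel X := fun x y => `[< same_orbit x y >].

Lemma orbit_rel_refl : reflexive orbit_rel.
Proof. by move=> x; apply/asboolP; exact: same_orbit_refl. Qed.

Lemma orbit_rel_sym : symmetric orbit_rel.
Proof.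
move=> x y; apply/asboolP/asboolP; exact: same_orbit_sym.
Qed.

Lemma orbit_rel_trans : transitive orbit_rel.
Proof.
move=> y x z /asboolP h1 /asboolP h2; apply/asboolP.
exact: same_orbit_trans h1 h2.
Qed.

Definition orbit_equiv : equiv_rel X :=
  EquivRel orbit_rel orbit_rel_refl orbit_rel_sym orbit_rel_trans.

Definition OrbitSpace : topologicalType :=
  quotient_topology {eq_quot orbit_equiv}.

Definition orbit_map : X -> OrbitSpace := \pi_OrbitSpace.

Definition Pk (k : nat) : topologicalType :=
  set_type [set gs : {ptws 'I_k -> PX X} |
    forall i j : 'I_k, nat_of_ord j = (nat_of_ord i).+1 ->
      same_orbit (pev (gs i) i1) (pev (gs j) i0)].

Definition Pk_path {k} (gs : Pk k) (i : 'I_k) : PX X := set_val gs i.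

(* pi_k(gamma_1,...,gamma_k) = (gamma_1(0), gamma_k(1)) ; the index
   k is used for k >= 1 (for k = 0 we read it as k = 1) *)
Definition pi_k (k : nat) (gs : Pk k.-1.+1) : X * X :=
  (pev (Pk_path gs ord0) i0, pev (Pk_path gs ord_max) i1).

Definition TCG (k : nat) : natinf := secat (@pi_k k).

Definition TCGinf : natinf := natinf_min (fun k => TCG k.+1).

Definition Pk_star (x0 : X) (k : nat) : topologicalType :=
  set_type [set gs : Pk k.-1.+1 | pev (Pk_path gs ord0) i0 = x0].

Definition q_k (x0 : X) (k : nat) (gs : Pk_star x0 k) : X :=
  pev (Pk_path (set_val gs) ord_max) i1.

Definition catG (x0 : X) (k : nat) : natinf := secat (@q_k x0 k).

Definition catGinf (x0 : X) : natinf := natinf_min (fun k => catG x0 k.+1).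

End Orbits.

(* Main.v *)
Require Import Defs.
From HB Require Import structures.
From mathcomp Require Import all_boot all_order all_algebra generic_quotient.
From mathcomp Require Import mathcomp_extra boolp classical_sets functions.
From mathcomp Require Import set_interval reals topology normedtype.
From mathcomp Require Import Rstruct Rstruct_topology lra.
From Stdlib Require Rdefinitions.
Import Order.TTheory GRing.Theory Num.Theory.
Local Notation R := Rdefinitions.R.
Set Implicit Arguments.
Unset Strict Implicit.
Unset Printing Implicit Defensive.
Local Open Scope classical_set_scope.
Local Open Scope ring_scope.

Definition v01 (t : I01) : R := set_val t.
Lemma v01_cont : continuous v01.
Proof. exact: (@initial_continuous _ R set_val). Qed.

Lemma v01_mem (t : I01) : 0 <= v01 t <= 1.
Proof. case: t => r p; rewrite /v01 set_valE /=; move/set_mem: p; rewrite /unit_interval /= in_itv //. Qed.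

Lemma into01_cont {Z : topologicalType} (f : Z -> I01) :
  continuous (v01 \o f) -> continuous f.
Proof. move=> h. exact: (@continuous_comp_initial _ _ _ set_val f). Qed.

Lemma v01_inj : injective v01.
Proof. by move=> a b; rewrite /v01 set_valE; apply: val_inj. Qed.

Definition clampR (r : R) : R := Num.min (Num.max r 0) 1.
Lemma clampR_mem r : clampR r \in unit_interval.
Proof.
apply/mem_set; rewrite /unit_interval /= in_itv /= /clampR.
by rewrite le_min ge_min le_max lexx ler01 !orbT lexx orbT.
Qed.
Lemma clampR_id r : 0 <= r <= 1 -> clampR r = r.
Proof. by case/andP=> h0 h1; rewrite /clampR (max_idPl h0) (min_idPl h1). Qed.
Lemma clampR_cont : continuous clampR.
Proof.
move=> x; apply: (@continuous_min _ R (fun r => Num.max r 0) (cst 1)).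
  apply: (@continuous_max _ R id (cst 0)) => //; exact: cvg_cst.
exact: cvg_cst.
Qed.

Definition cl (r : R) : I01 := exist _ (clampR r) (clampR_mem r).
Lemma v01_cl r : v01 (cl r) = clampR r.
Proof. by rewrite /v01 set_valE. Qed.
Lemma cl_cont : continuous cl.
Proof. apply: into01_cont => x /=. rewrite /comp. under eq_fun do rewrite v01_cl. exact: clampR_cont. Qed.
Lemma cl_v01 t : cl (v01 t) = t.
Proof. by apply: v01_inj; rewrite v01_cl clampR_id // v01_mem. Qed.

Lemma I01_compact : compact [set: I01].
Proof.
have -> : [set: I01] = cl @` `[0, 1].
  apply/seteqP; split => t // _; exists (v01 t); last exact: cl_v01.
  by rewrite /= in_itv /= v01_mem.
apply: continuous_compact; first exact: continuous_subspaceT cl_cont.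
exact: segment_compact.
Qed.

Lemma I01_hausdorff : hausdorff_space I01.
Proof.
rewrite open_hausdorff => x y xy.
have : v01 x != v01 y by apply: contra xy => /eqP/v01_inj ->.
have := @Rhausdorff R; rewrite open_hausdorff => /[apply] -[[A B] /= [xA yB] [oA oB AB]].
exists (v01 @^-1` A, v01 @^-1` B) => /=.
  by split; rewrite inE /=; move: xA yB; rewrite !inE.
split; [by exists A | by exists B|].
apply/eqP; apply/seteqP; split => // t [At Bt]; move/eqP: AB => AB.
by have : (A `&` B) (v01 t) by [] ; rewrite AB.
Qed.

Lemma I01_lc : locally_compact [set: I01].
Proof.
move=> x _; exists setT; first exact: filterT.
split; first exact: I01_compact. exact: closedT.
Qed.

Section Eval.
Import ArrowAsCompactOpen.
Lemma ev_cont (X : topologicalType) : continuous (fun p : PX X * I01 => pev p.1 p.2).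
Proof.
have h := @continuous_uncurry (PX X) I01 X (fun g => set_val g) I01_lc I01_hausdorff.
have := h (@initial_continuous _ _ set_val) (fun g => set_valP g).
suff -> : (fun p : PX X * I01 => pev p.1 p.2) = uncurry (fun g => set_val g) by [].
by apply: funext => -[g t].
Qed.
End Eval.

Section MkPath.
Import ArrowAsCompactOpen.
Context {Z X : topologicalType} (H : Z * I01 -> X) (cH : continuous H).

Definition mkpath (z : Z) : PX X :=
  exist _ (curry H z : {compact-open, I01 -> X}) (mem_set ((continuous_curry cH).2 z)).

Lemma pev_mkpath z t : pev (mkpath z) t = H (z, t).
Proof. by rewrite /pev set_valE. Qed.

Lemma mkpath_cont : continuous mkpath.
Proof.
apply: (@continuous_comp_initial _ _ _ set_val mkpath).
exact: (continuous_curry_fun cH).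
Qed.
End MkPath.

Lemma into_ptws {Z Y : topologicalType} {I : Type} (h : Z -> {ptws I -> Y}) :
  (forall i, continuous (fun z => h z i)) -> continuous h.
Proof.
move=> hc z; apply/cvg_sup => i.
exact: (@continuous_comp_initial _ _ _ (fun f : I -> Y => f i) h (hc i) z).
Qed.

Lemma ptws_proj_cont {Y : topologicalType} {I : eqType} (i : I) :
  continuous (fun f : {ptws I -> Y} => f i).
Proof. exact: (@proj_continuous I (fun _ => Y) i). Qed.

Section Orb.
Context {G X : topologicalType} (a : topGroupAction G X).
Lemma rho_cont : continuous (orbit_map a).
Proof. exact: pi_continuous. Qed.
Lemma rho_eq x y : orbit_map a x = orbit_map a y <-> same_orbit a x y.
Proof.
rewrite /orbit_map; split.
  move=> h; have : orbit_equiv a x y by apply/eqquotP; exact: h.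
  by move/asboolP.
move=> h; apply/eqquotP; exact/asboolP.
Qed.
End Orb.

Lemma v01_i0 : v01 i0 = 0. Proof. by rewrite /v01 set_valE. Qed.
Lemma v01_i1 : v01 i1 = 1. Proof. by rewrite /v01 set_valE. Qed.
Lemma cl0 : cl 0 = i0.
Proof. by apply: v01_inj; rewrite v01_cl v01_i0 clampR_id // lexx ler01. Qed.
Lemma cl1 : cl 1 = i1.
Proof. by apply: v01_inj; rewrite v01_cl v01_i1 clampR_id // lexx ler01. Qed.

Lemma snd01_cont {Z : topologicalType} : continuous (fun p : Z * I01 => v01 p.2).
Proof. move=> p; apply: continuous_comp; [exact: cvg_snd | exact: v01_cont]. Qed.

Lemma pair_cont {A B C : topologicalType} (f : A -> B) (g : A -> C) :
  continuous f -> continuous g -> continuous (fun x => (f x, g x)).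
Proof.
move=> cf cg x.
by apply: (@cvg_pair _ _ _ (nbhs x) (nbhs (f x)) (nbhs (g x))); [exact: cf|exact: cg].
Qed.

Lemma comp_cont {A B C : topologicalType} (f : A -> B) (g : B -> C) :
  continuous f -> continuous g -> continuous (g \o f).
Proof. by move=> cf cg x; apply: continuous_comp; [exact: cf | exact: cg]. Qed.

Lemma fst_cont {A B : topologicalType} : continuous (fun p : A * B => p.1).
Proof. by move=> p; exact: cvg_fst. Qed.
Lemma snd_cont {A B : topologicalType} : continuous (fun p : A * B => p.2).
Proof. by move=> p; exact: cvg_snd. Qed.

Lemma reparam_cont {Z Y : topologicalType} (F : Z * I01 -> Y) (f : R -> R) :
  continuous F -> continuous f -> continuous (fun p : Z * I01 => F (p.1, cl (f (v01 p.2)))).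
Proof.
move=> cF cf.
apply: (@comp_cont _ _ _ (fun p : Z * I01 => (p.1, cl (f (v01 p.2)))) F) => //.
apply: pair_cont; first exact: fst_cont.
apply: (@comp_cont _ _ _ _ cl) => //; last exact: cl_cont.
apply: (@comp_cont _ _ _ _ f) => //; exact: snd01_cont.
Qed.

Lemma mul2_cont : continuous (fun r : R => 2 * r).
Proof. exact: mulrl_continuous. Qed.
Lemma mul2m1_cont : continuous (fun r : R => 2 * r - 1).
Proof.
move=> x; apply: (@continuousB _ R^o R (fun r : R => 2 * r) (fun _ => 1)).
  exact: mul2_cont.
exact: cvg_cst.
Qed.

Section Glue.
Context {Z Y : topologicalType} (F1 F2 : Z * I01 -> Y).
Definition glue (p : Z * I01) : Y :=
  if v01 p.2 <= 2^-1 then F1 (p.1, cl (2 * v01 p.2)) else F2 (p.1, cl (2 * v01 p.2 - 1)).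

Lemma glue0 z : glue (z, i0) = F1 (z, i0).
Proof. by rewrite /glue /= v01_i0 invr_ge0 ler0n mulr0 cl0. Qed.
Lemma glue1 z : glue (z, i1) = F2 (z, i1).
Proof.
rewrite /glue /= v01_i1 ifF; last by apply/negbTE; rewrite -ltNge; lra.
by congr F2; congr pair; rewrite -cl1; congr cl; lra.
Qed.

Lemma glue_cont : continuous F1 -> continuous F2 -> (forall z, F1 (z, i1) = F2 (z, i0)) ->
  continuous glue.
Proof.
move=> c1 c2 e.
pose A := [set p : Z * I01 | v01 p.2 <= 2^-1].
pose B := [set p : Z * I01 | 2^-1 <= v01 p.2].
have cA : closed A.
  have t1 : closed [set x : R | x <= 2^-1] by exact: closed_le.
  have t2 : {in ~` (fun p : Z * I01 => v01 p.2) @^-1` [set x : R | x <= 2^-1], continuous (fun p : Z * I01 => v01 p.2)}.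
    by move=> p _; exact: snd01_cont.
  exact: (preimage_closed t2 t1).
have cB : closed B.
  have t1 : closed [set x : R | 2^-1 <= x] by exact: closed_ge.
  have t2 : {in ~` (fun p : Z * I01 => v01 p.2) @^-1` [set x : R | 2^-1 <= x], continuous (fun p : Z * I01 => v01 p.2)}.
    by move=> p _; exact: snd01_cont.
  exact: (preimage_closed t2 t1).
apply/continuous_subspace_setT.
have -> : [set: Z * I01] = A `|` B.
  apply/seteqP; split => p // _; rewrite /A /B /=.
  by case: (lerP (v01 p.2) 2^-1) => h; [left|right; exact: ltW].
apply: withinU_continuous => //.
  apply: (@subspace_eq_continuous _ _ _ (fun p : Z * I01 => F1 (p.1, cl (2 * v01 p.2)))).
    by move=> p /set_mem pA; rewrite /from_subspace /glue /= ifT.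
  have := @continuous_subspaceT _ _ A _ (reparam_cont (f := fun r => 2 * r) c1 mul2_cont).
  exact.
apply: (@subspace_eq_continuous _ _ _ (fun p : Z * I01 => F2 (p.1, cl (2 * v01 p.2 - 1)))).
  move=> p /set_mem pB; rewrite /from_subspace /glue /=; case: ifPn => // pA.
  have h : v01 p.2 = 2^-1 by apply/eqP; rewrite eq_le pA; exact: pB.
  rewrite h; have -> : 2 * 2^-1 = 1 :> R by lra.
  have -> : 1 - 1 = 0 :> R by lra.
  by rewrite cl0 cl1 e.
have := @continuous_subspaceT _ _ B _ (reparam_cont (f := fun r => 2 * r - 1) c2 mul2m1_cont).
exact.
Qed.
End Glue.

Definition rev01 (t : I01) : I01 := cl (1 - v01 t).
Lemma rev01_i0 : rev01 i0 = i1.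
Proof. by rewrite /rev01 v01_i0 subr0 cl1. Qed.
Lemma rev01_i1 : rev01 i1 = i0.
Proof. by rewrite /rev01 v01_i1 subrr cl0. Qed.
Lemma sub1_cont : continuous (fun r : R => 1 - r).
Proof.
move=> x; apply: (@continuousB _ R^o R (fun _ => 1) id); [exact: cvg_cst | exact: cvg_id].
Qed.

Definition hrev {Z Y : Type} (H : Z * I01 -> Y) (p : Z * I01) : Y := H (p.1, rev01 p.2).
Lemma hrev_cont {Z Y : topologicalType} (H : Z * I01 -> Y) : continuous H -> continuous (hrev H).
Proof. move=> cH; exact: (reparam_cont cH sub1_cont). Qed.
Lemma hrev0 {Z Y : Type} (H : Z * I01 -> Y) z : hrev H (z, i0) = H (z, i1).
Proof. by rewrite /hrev /= rev01_i0. Qed.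
Lemma hrev1 {Z Y : Type} (H : Z * I01 -> Y) z : hrev H (z, i1) = H (z, i0).
Proof. by rewrite /hrev /= rev01_i1. Qed.

Section HomotopyLemmas.
Context {A B : topologicalType}.

Lemma homotopic_sym (f g : A -> B) : homotopic f g -> homotopic g f.
Proof.
case=> H [cH [H0 H1]]; exists (hrev H); split; first exact: hrev_cont.
by split => a; rewrite ?hrev0 ?hrev1.
Qed.

Lemma homotopic_trans (f g h : A -> B) : homotopic f g -> homotopic g h -> homotopic f h.
Proof.
case=> H [cH [H0 H1]] [K [cK [K0 K1]]]; exists (glue H K); split.
  by apply: glue_cont => // z; rewrite H1 K0.
by split => z; rewrite ?glue0 ?glue1.
Qed.

Lemma homotopic_eq (f g : A -> B) : continuous f -> f =1 g -> homotopic f g.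
Proof.
move=> cf fg; exists (fun p => f p.1); split; first exact: (comp_cont fst_cont cf).
by split => // z; rewrite fg.
Qed.

Lemma homotopic_eqL (f f' g : A -> B) : f =1 f' -> homotopic f g -> homotopic f' g.
Proof. by move=> ff' [H [cH [H0 H1]]]; exists H; split => //; split => // z; rewrite H0 ff'. Qed.

Lemma homotopic_comp {C : topologicalType} (f g : A -> B) (k : B -> C) :
  continuous k -> homotopic f g -> homotopic (k \o f) (k \o g).
Proof.
move=> ck [H [cH [H0 H1]]]; exists (k \o H); split; first exact: comp_cont.
by split => z /=; rewrite ?H0 ?H1.
Qed.
End HomotopyLemmas.

Lemma pathcoord_cont {Z X : topologicalType} (c : Z -> PX X) :
  continuous c -> continuous (fun p : Z * I01 => pev (c p.1) p.2).
Proof.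
move=> cc.
apply: (@comp_cont _ _ _ (fun p : Z * I01 => (c p.1, p.2)) (fun q : PX X * I01 => pev q.1 q.2)).
  apply: pair_cont; [exact: comp_cont fst_cont cc | exact: snd_cont].
exact: ev_cont.
Qed.

Lemma setval_cont {T : topologicalType} (A : set T) : continuous (@set_val T A).
Proof. exact: (@initial_continuous _ _ set_val). Qed.

Lemma least_le (P Q : nat -> Prop) : (forall n, P n -> Q n) -> natinf_le (least Q) (least P).
Proof.
move=> PQ; rewrite /least.
case: pselect => [hQ|nQ]; case: pselect => [hP|nP] //=.
- case: (ex_minnP hP) => m /asboolP Pm minP.
  case: (ex_minnP hQ) => m' _ minQ.
  by apply: minQ; apply/asboolP; exact: PQ.
- exfalso; case: hP => m /asboolP Pm; apply: nQ; exists m; apply/asboolP; exact: PQ.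
Qed.

Lemma natinf_le_trans a b c : natinf_le a b -> natinf_le b c -> natinf_le a c.
Proof. by case: a; case: b; case: c => //= x y z; exact: leq_trans. Qed.

Lemma natinf_le_anti a b : natinf_le a b -> natinf_le b a -> a = b.
Proof. by case: a; case: b => //= x y h1 h2; congr Some; apply/eqP; rewrite eqn_leq h1 h2. Qed.

Lemma natinf_min_eq (f : nat -> natinf) j : (forall k, natinf_le (f j) (f k)) -> natinf_min f = f j.
Proof.
move=> hj; rewrite /natinf_min /least.
case: pselect => [h|nh].
  case: (ex_minnP h) => m /asboolP [k hk] minm.
  have hjk := hj k.
  case E : (f j) hjk => [v|] hjk'; last by move: hjk' hk; case: (f k).
  congr Some; apply/eqP; rewrite eqn_leq; apply/andP; split.
    apply: minm; apply/asboolP; exists j; rewrite E /=; exact: leqnn.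
  move: hjk' hk; case: (f k) => //= w h1 h2; exact: leq_trans h1 h2.
case E : (f j) => [v|] //; exfalso; apply: nh; exists v; apply/asboolP; exists j; rewrite E /=; exact: leqnn.
Qed.

Lemma cover_mono {B : topologicalType} n (Q Q' : set B -> Prop) :
  (forall V, open V -> Q V -> Q' V) -> open_cover_with n Q -> open_cover_with n Q'.
Proof. by move=> h [U [oU [cU qU]]]; exists U; split => //; split => // i; apply: h. Qed.

Lemma cover_pullback {A B : topologicalType} (f : A -> B) n (Q : set B -> Prop) (Q' : set A -> Prop) :
  continuous f -> (forall V, open V -> Q V -> Q' (f @^-1` V)) ->
  open_cover_with n Q -> open_cover_with n Q'.
Proof.
move=> cf h [U [oU [cU qU]]]; exists (fun i => f @^-1` U i); split.
  by move=> i; move/continuousP: cf; apply.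
split; last by move=> i; apply: h.
by rewrite -preimage_bigcup cU preimage_setT.
Qed.

Section PkStuff.
Context {G X : topologicalType} (a : topGroupAction G X).
Local Notation rho := (orbit_map a).

Definition Pkset k := [set gs : {ptws 'I_k -> PX X} | forall i j : 'I_k, nat_of_ord j = (nat_of_ord i).+1 ->
      same_orbit a (pev (gs i) i1) (pev (gs j) i0)].

Definition p2fun (g1 g2 : PX X) : {ptws 'I_2 -> PX X} :=
  fun i : 'I_2 => if nat_of_ord i == 0%N then g1 else g2.

Lemma mkP2_mem (g1 g2 : PX X) (h : same_orbit a (pev g1 i1) (pev g2 i0)) :
  p2fun g1 g2 \in (@Pkset 2).
Proof.
apply/mem_set => -[[|[|i]] pi] [[|[|j]] pj] //= e.
Qed.

Definition mkP2 (g1 g2 : PX X) (h : same_orbit a (pev g1 i1) (pev g2 i0)) : Pk a 2 :=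
  @exist _ (fun x => x \in (@Pkset 2)) _ (mkP2_mem h).

Lemma Pk_path_mkP2 g1 g2 h (i : 'I_2) :
  Pk_path (@mkP2 g1 g2 h) i = if nat_of_ord i == 0%N then g1 else g2.
Proof. by rewrite /Pk_path set_valE. Qed.

Lemma mkP2_cont {Z : topologicalType} (g1 g2 : Z -> PX X)
  (h : forall z, same_orbit a (pev (g1 z) i1) (pev (g2 z) i0)) :
  continuous g1 -> continuous g2 -> continuous (fun z => mkP2 (h z)).
Proof.
move=> c1 c2; apply: (@continuous_comp_initial _ _ _ set_val).
apply: (@into_ptws Z (PX X) 'I_2 (fun z => p2fun (g1 z) (g2 z))).
by move=> i; rewrite /p2fun; case: (nat_of_ord i == 0%N).
Qed.

Lemma Pk_path_cont {Z : topologicalType} k (c : Z -> Pk a k) (i : 'I_k) :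
  continuous c -> continuous (fun z => Pk_path (c z) i).
Proof.
move=> cc; apply: (@comp_cont _ _ _ c (fun gs : Pk a k => Pk_path gs i)) => //.
apply: (@comp_cont _ _ _ set_val (fun gs : {ptws 'I_k -> PX X} => gs i)).
  exact: setval_cont.
exact: ptws_proj_cont.
Qed.

Lemma chainH n {Z : topologicalType} (c : Z -> 'I_n.+1 -> PX X) :
  (forall i, continuous (fun z => c z i)) ->
  (forall z (i j : 'I_n.+1), nat_of_ord j = (nat_of_ord i).+1 ->
     same_orbit a (pev (c z i) i1) (pev (c z j) i0)) ->
  exists H : Z * I01 -> OrbitSpace a, continuous H /\
    (forall z, H (z, i0) = rho (pev (c z ord0) i0)) /\
    (forall z, H (z, i1) = rho (pev (c z ord_max) i1)).
Proof.
elim: n Z c => [|n IH] Z c cc ch.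
  exists (fun p => rho (pev (c p.1 ord0) p.2)); split.
    apply: (@comp_cont _ _ _ (fun p : Z * I01 => pev (c p.1 ord0) p.2) rho); last exact: rho_cont.
    exact: (pathcoord_cont (cc ord0)).
  split => z //=.
  by have -> : (ord_max : 'I_1) = ord0 by apply: val_inj.
have [H [cH [H0 H1]]] := IH Z (fun z i => c z (widen_ord (leqnSn n.+1) i))
  (fun i => cc _) (fun z i j e => ch z (widen_ord (leqnSn n.+1) i) (widen_ord (leqnSn n.+1) j) e).
pose L := fun p : Z * I01 => rho (pev (c p.1 ord_max) p.2).
have cL : continuous L.
  apply: (@comp_cont _ _ _ (fun p : Z * I01 => pev (c p.1 ord_max) p.2) rho); last exact: rho_cont.
  exact: (pathcoord_cont (cc ord_max)).
exists (glue H L); split.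
  apply: glue_cont => // z; rewrite H1 /L /=; apply/rho_eq.
  by apply: ch => /=.
split => z; rewrite ?glue0 ?glue1 //.
rewrite H0; congr (rho (pev (c z _) i0)); exact: val_inj.
Qed.

End PkStuff.

Section WMap.
Context {A B : topologicalType} (f : A -> B) (V : set B).
Lemma wmap_mem (u : set_type (f @^-1` V)) : f (set_val u) \in V.
Proof. by apply/mem_set; have := set_valP u. Qed.
Definition wmap (u : set_type (f @^-1` V)) : set_type V := @exist _ (fun x => x \in V) _ (wmap_mem u).
Lemma wmapE u : set_val (wmap u) = f (set_val u).
Proof. by rewrite set_valE. Qed.
Lemma wmap_cont : continuous f -> continuous wmap.
Proof.
move=> cf; apply: (@continuous_comp_initial _ _ _ set_val).
have -> : set_val \o wmap = f \o set_val by apply: funext => u; rewrite /= wmapE.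
apply: comp_cont => //; exact: setval_cont.
Qed.
End WMap.

Lemma homot_reparam {Z W Y : topologicalType} (w : Z -> W) (H : W * I01 -> Y) :
  continuous w -> continuous H -> continuous (fun p : Z * I01 => H (w p.1, p.2)).
Proof.
move=> cw cH; apply: (@comp_cont _ _ _ (fun p : Z * I01 => (w p.1, p.2)) H) => //.
apply: pair_cont; last exact: snd_cont.
exact: (comp_cont fst_cont cw).
Qed.

Section Main.
Context {G X : topologicalType} (a : topGroupAction G X) (x0 : X).
Context (pc : path_connected (OrbitSpace a)) (fib : fibration (orbit_map a)).
Local Notation rho := (orbit_map a).

Lemma const_cont {A B : topologicalType} (b : B) : continuous (fun _ : A => b).
Proof. by move=> x; exact: cvg_cst. Qed.

Lemma lem_a (U : set X) : nullhomotopic (rho \o @set_val X U) ->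
  has_homotopy_section (@q_k _ _ a x0 2) U.
Proof.
case=> b [H [cH [H0 H1]]].
have [Ht [cHt [pHt Ht0]]] := fib cH (@setval_cont _ U) (fun z => esym (H0 z)).
have [c [cc [c0 c1]]] := pc (rho x0) b.
have [L [cL [pL L0]]] := @fib U (fun p : U * I01 => c p.2) (fun _ : U => x0)
  (comp_cont snd_cont cc) (@const_cont _ _ x0) (fun z => esym c0).
pose g1 := mkpath cL; pose g2 := mkpath (hrev_cont cHt).
have h : forall u, same_orbit a (pev (g1 u) i1) (pev (g2 u) i0).
  move=> u; apply/rho_eq; rewrite !pev_mkpath hrev0 pL pHt /= c1 H1 //.
have hs : forall u, mkP2 (h u) \in [set gs : Pk a 2 | pev (Pk_path gs ord0) i0 = x0].
  by move=> u; apply/mem_set; rewrite /= Pk_path_mkP2 /= pev_mkpath L0.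
exists (fun u => @exist _ (fun x => x \in [set gs : Pk a 2 | pev (Pk_path gs ord0) i0 = x0]) _ (hs u)).
split.
  apply: (@continuous_comp_initial _ _ _ set_val).
  have -> : (set_val \o (fun u => @exist _ (fun x => x \in [set gs : Pk a 2 | pev (Pk_path gs ord0) i0 = x0]) _ (hs u))) = (fun u => mkP2 (h u)).
    by apply: funext => u; rewrite /= set_valE.
  apply: (@mkP2_cont _ _ a _ g1 g2 h); [exact: mkpath_cont | exact: mkpath_cont].
apply: homotopic_sym; apply: homotopic_eq; first exact: setval_cont.
move=> u; rewrite /q_k /= set_valE /= Pk_path_mkP2 /= pev_mkpath hrev1 Ht0 //.
Qed.

Lemma lem_b k (U : set X) : has_homotopy_section (@q_k _ _ a x0 k.+1) U ->
  nullhomotopic (rho \o @set_val X U).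
Proof.
case=> s [cs [K [cK [K0 K1]]]].
pose c := fun (u : U) (i : 'I_k.+1) => Pk_path (set_val (s u)) i.
have cc : forall i, continuous (fun u => c u i).
  move=> i; apply: (@Pk_path_cont _ _ a _ k.+1 (fun u => set_val (s u)) i).
  exact: (comp_cont cs (@setval_cont _ _)).
have ch : forall u (i j : 'I_k.+1), nat_of_ord j = (nat_of_ord i).+1 ->
    same_orbit a (pev (c u i) i1) (pev (c u j) i0).
  move=> u i j e; have := set_valP (set_val (s u)).
  by rewrite /c /Pk_path; apply.
have [H [cH [H0 H1]]] := chainH cc ch.
exists (rho x0); exists (glue (hrev (rho \o K)) (hrev H)); split.
  apply: glue_cont.
  - apply: hrev_cont; apply: (@comp_cont _ _ _ K rho) => //; exact: rho_cont.
  - exact: hrev_cont cH.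
  - by move=> z; rewrite hrev1 hrev0 /= K0 H1.
split => z; rewrite ?glue0 ?glue1.
  by rewrite hrev0 /= K1.
rewrite hrev1 H0; congr rho; have := set_valP (s z); rewrite /c; exact.
Qed.

Lemma pev_at_cont {Z : topologicalType} (c : Z -> PX X) (t : I01) :
  continuous c -> continuous (fun z => pev (c z) t).
Proof.
move=> cc; apply: (@comp_cont _ _ _ (fun z : Z => (z, t)) (fun p : Z * I01 => pev (c p.1) p.2)).
  apply: pair_cont; [by move=> z; exact: cvg_id | exact: (@const_cont _ _ t)].
exact: pathcoord_cont.
Qed.

Lemma lem_d k (U : set (X * X)) : has_homotopy_section (@pi_k _ _ a k.+1) U ->
  has_homotopy_section (@pi_k _ _ a 2) U.
Proof.
case=> s [cs hom].
pose c := fun (u : U) (i : 'I_k.+1) => Pk_path (s u) i.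
have cc : forall i, continuous (fun u => c u i).
  by move=> i; apply: (@Pk_path_cont _ _ a _ k.+1 s i).
have ch : forall u (i j : 'I_k.+1), nat_of_ord j = (nat_of_ord i).+1 ->
    same_orbit a (pev (c u i) i1) (pev (c u j) i0).
  move=> u i j e; have := set_valP (s u).
  by rewrite /c /Pk_path; apply.
have [H [cH [H0 H1]]] := chainH cc ch.
have ch0 : continuous (fun u => pev (c u ord0) i0) by exact: pev_at_cont.
have [L [cL [pL L0]]] := @fib U H (fun u => pev (c u ord0) i0) cH ch0 (fun z => esym (H0 z)).
have cM : continuous (fun p : U * I01 => pev (c p.1 ord_max) i1).
  apply: (@comp_cont _ _ _ fst (fun u : U => pev (c u ord_max) i1)); first exact: fst_cont.
  exact: pev_at_cont.
pose g1 := mkpath cL; pose g2 := mkpath cM.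
have h : forall u, same_orbit a (pev (g1 u) i1) (pev (g2 u) i0).
  by move=> u; apply/rho_eq; rewrite !pev_mkpath pL H1.
exists (fun u => mkP2 (h u)); split.
  by apply: (@mkP2_cont _ _ a _ g1 g2 h); exact: mkpath_cont.
apply: homotopic_eqL hom => u.
by rewrite /pi_k /= !Pk_path_mkP2 /= !pev_mkpath L0.
Qed.

Lemma lem_c (V : set (OrbitSpace a)) : nullhomotopic (idfun \o @set_val _ V) ->
  nullhomotopic (rho \o @set_val X (rho @^-1` V)).
Proof.
case=> b [H [cH [H0 H1]]]; exists b.
exists (fun p => H (wmap p.1, p.2)); split.
  by apply: homot_reparam => //; apply: wmap_cont; exact: rho_cont.
by split => u; rewrite ?H1 // H0 /= wmapE.
Qed.

Definition rr (p : X * X) : OrbitSpace a * OrbitSpace a := (rho p.1, rho p.2).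
Lemma rr_cont : continuous rr.
Proof.
apply: pair_cont.
  apply: (@comp_cont _ _ _ fst rho); [exact: fst_cont | exact: rho_cont].
apply: (@comp_cont _ _ _ snd rho); [exact: snd_cont | exact: rho_cont].
Qed.

Lemma lem_e (V : set (OrbitSpace a * OrbitSpace a)) :
  has_homotopy_section (@path_fib (OrbitSpace a)) V ->
  has_homotopy_section (@pi_k _ _ a 2) (rr @^-1` V).
Proof.
case=> sg [csg [K [cK [K0 K1]]]].
pose U := rr @^-1` V.
pose w := @wmap _ _ rr V.
have cw : continuous w by apply: wmap_cont; exact: rr_cont.
pose K' := fun p : U * I01 => K (w p.1, p.2).
have cK' : continuous K' by exact: homot_reparam.
have cs1 : continuous (fun u : U => (set_val u).1).
  apply: (@comp_cont _ _ _ set_val fst); [exact: setval_cont | exact: fst_cont].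
have cs2 : continuous (fun u : U => (set_val u).2).
  apply: (@comp_cont _ _ _ set_val snd); [exact: setval_cont | exact: snd_cont].
have cK1 : continuous (hrev (fun p => (K' p).1)).
  apply: hrev_cont; apply: (@comp_cont _ _ _ K' fst) => //; exact: fst_cont.
have cK2 : continuous (hrev (fun p => (K' p).2)).
  apply: hrev_cont; apply: (@comp_cont _ _ _ K' snd) => //; exact: snd_cont.
have e1 : forall u : U, rho ((set_val u).1) = hrev (fun p => (K' p).1) (u, i0).
  by move=> u; rewrite hrev0 /K' /= K1 wmapE.
have [L1 [cL1 [pL1 L10]]] := @fib U _ (fun u : U => (set_val u).1) cK1 cs1 e1.
have cS : continuous (fun p : U * I01 => pev (sg (w p.1)) p.2).
  exact: (pathcoord_cont (comp_cont cw csg)).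
have cL1' : continuous (fun u : U => L1 (u, i1)).
  apply: (@comp_cont _ _ _ (fun u : U => (u, i1)) L1) => //.
  apply: pair_cont; [by move=> z; exact: cvg_id | exact: (@const_cont _ _ i1)].
have e2 : forall u : U, rho (L1 (u, i1)) = pev (sg (w u)) i0.
  by move=> u; rewrite pL1 hrev1 /K' /= K0.
have [L2 [cL2 [pL2 L20]]] := @fib U _ (fun u : U => L1 (u, i1)) cS cL1' e2.
have e3 : forall u : U, rho ((set_val u).2) = hrev (fun p => (K' p).2) (u, i0).
  by move=> u; rewrite hrev0 /K' /= K1 wmapE.
have [L3 [cL3 [pL3 L30]]] := @fib U _ (fun u : U => (set_val u).2) cK2 cs2 e3.
pose g1 := mkpath cL2; pose g2 := mkpath (hrev_cont cL3).
have h : forall u, same_orbit a (pev (g1 u) i1) (pev (g2 u) i0).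
  by move=> u; apply/rho_eq; rewrite !pev_mkpath hrev0 pL2 pL3 hrev1 /K' /= K0.
exists (fun u => mkP2 (h u)); split.
  by apply: (@mkP2_cont _ _ a _ g1 g2 h); exact: mkpath_cont.
exists (fun p : U * I01 => (hrev L1 p, (set_val p.1).2)); split.
  apply: pair_cont; first exact: hrev_cont.
  exact: (comp_cont fst_cont cs2).
split => u.
  by rewrite hrev0 /pi_k /= !Pk_path_mkP2 /= !pev_mkpath L20 hrev1 L30.
by rewrite hrev1 L10; case: (set_val u).
Qed.

End Main.

Theorem mainTheorem10 (G X : topologicalType) (a : topGroupAction G X)
    (x0 : X) :
  path_connected (OrbitSpace a) ->
  fibration (orbit_map a) ->
  (catGinf a x0 = catG a x0 2 /\ catG a x0 2 = cat_map (orbit_map a) /\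
     natinf_le (cat_map (orbit_map a)) (LScat (OrbitSpace a))) /\
  (TCGinf a = TCG a 2 /\ natinf_le (TCG a 2) (TC (OrbitSpace a))).
Proof.
move=> pc fib.
have hab : natinf_le (catG a x0 2) (cat_map (orbit_map a)).
  apply: least_le => n; apply: cover_mono => U _; exact: lem_a.
have hb : forall k, natinf_le (cat_map (orbit_map a)) (catG a x0 k.+1).
  move=> k; apply: least_le => n; apply: cover_mono => U _; exact: lem_b.
have e2 : catG a x0 2 = cat_map (orbit_map a) := natinf_le_anti hab (hb 1%N).
have hd : forall k, natinf_le (TCG a 2) (TCG a k.+1).
  move=> k; apply: least_le => n; apply: cover_mono => U _; exact: lem_d.
split; split.
- apply: (@natinf_min_eq (fun k => catG a x0 k.+1) 1%N) => k /=.
  by rewrite e2; exact: hb.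
- split; first exact: e2.
  apply: least_le => n; apply: cover_pullback; first exact: rho_cont.
  by move=> V _; exact: lem_c.
- exact: (@natinf_min_eq (fun k => TCG a k.+1) 1%N).
- apply: least_le => n; apply: cover_pullback; first exact: rr_cont.
  by move=> V _; exact: lem_e.
Qed.
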